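(* If the function $\dot f^{-1}$ is strictly positive (that is, $\dot f^{-1}:\mathbb{R}\to(0,\infty)$), then $\mathcal{A}_{Q,z}=(0,\infty)$.
   Context: Setting. - $\mathcal{M}\subseteq\mathbb{R}^d$; $h:\mathcal{M}\times\mathcal{X}\to\mathcal{Y}$; the loss $\ell:\mathcal{Y}\times\mathcal{Y}\to[0,\infty)$ satisfies $\ell(y,y)=0$. - For a dataset $z=((x_1,y_1),\dots,(x_n,y_n))$, $L_z(\theta)=\frac1n\sum_i\ell(h(\theta,x_i),y_i)$. - $Q$ is a Borel probability measure on $\mathcal{M}$. - $f:[0,\infty)\to\mathbb{R}$ is convex with $f(1)=0$, and is strictly convex and differentiable. - $\dot f$ is its derivative on $(0,\infty)$ and $\dot f^{-1}$ the inverse of $\dot f$. Admissible regularization factors. $\mathcal{A}_{Q,z}\subseteq(0,\infty)$ is the set of $\lambda>0$ for which there exists $\beta\in\mathbb{R}$ with $\dot f^{-1}\big(-\frac{\beta+L_z(\theta)}{\lambda}\big)>0$ for all $\theta\in\operatorname{supp}Q$ and $\int\dot f^{-1}\big(-\frac{\beta+L_z(\theta)}{\lambda}\big)dQ(\theta)=1$. *)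

(* Defs.v *)
From HB Require Import structures.
From mathcomp Require Import all_boot all_order all_algebra.
From mathcomp Require Import all_classical all_reals all_analysis.
Set Implicit Arguments. Unset Strict Implicit. Unset Printing Implicit Defensive.
Import Order.TTheory GRing.Theory Num.Theory.
Import numFieldNormedType.Exports.
Local Open Scope classical_set_scope.
Local Open Scope ring_scope.

Notation borelRd R d := (g_sigma_algebraType (@open ('rV[R]_d))).

Definition msupp (R : realType) (d : nat)
  (mu : set (borelRd R d) -> \bar R) : set 'rV[R]_d :=
  [set th | forall U : set 'rV[R]_d, open U -> U th -> (0 < mu U)%E].

Definition Lz (R : realType) (d : nat) (X Y : Type)
  (h : 'rV[R]_d -> X -> Y) (loss : Y -> Y -> R) (n : nat)
  (z : 'I_n -> X * Y) (th : 'rV[R]_d) : R :=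
  n%:R^-1 * \sum_(i < n) loss (h th (z i).1) (z i).2.

Definition convex_on_nonneg (R : realType) (f : R -> R) : Prop :=
  forall x y t : R, 0 <= x -> 0 <= y -> 0 <= t -> t <= 1 ->
    f (t * x + (1 - t) * y) <= t * f x + (1 - t) * f y.

Definition strictly_convex_on_nonneg (R : realType) (f : R -> R) : Prop :=
  forall x y t : R, 0 <= x -> 0 <= y -> x != y -> 0 < t -> t < 1 ->
    f (t * x + (1 - t) * y) < t * f x + (1 - t) * f y.

(* The set A_{Q,z} of admissible regularization factors, where finv plays
   the role of (f')^{-1}. *)
Definition admissible (R : realType) (d : nat) (X Y : Type)
  (M : set 'rV[R]_d) (h : 'rV[R]_d -> X -> Y) (loss : Y -> Y -> R)
  (n : nat) (z : 'I_n -> X * Y) (Q : probability (borelRd R d) R)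
  (finv : R -> R) : set R :=
  [set lam | 0 < lam /\
    exists beta : R,
      (forall th, M th -> msupp Q th ->
         0 < finv (- (beta + Lz h loss z th) / lam)) /\
      (\int[Q]_(th in M) (finv (- (beta + Lz h loss z th) / lam))%:E = 1)%E].

(* Main.v *)
Require Import Defs.
From HB Require Import structures.
From mathcomp Require Import all_boot all_order all_algebra.
From mathcomp Require Import all_classical all_reals all_analysis.
From mathcomp Require Import ring lra measurable_realfun.
Import Order.TTheory GRing.Theory Num.Theory.
Import numFieldNormedType.Exports.
Local Open Scope classical_set_scope.
Local Open Scope ring_scope.

Lemma three_slope (R : realType) (f : R -> R) a b c :
  convex_on_nonneg f -> 0 <= a -> a < b -> b < c ->
  f b * (c - a) <= f a * (c - b) + f c * (b - a).
Proof.
move=> cf a0 ab bc.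
have ca : 0 < c - a by lra.
pose t := (c - b) / (c - a).
have t0 : 0 <= t by rewrite /t divr_ge0 //; lra.
have t1 : t <= 1 by rewrite /t ler_pdivrMr //; lra.
have c0 : 0 <= c by lra.
have := cf a c t a0 c0 t0 t1.
have -> : t * a + (1 - t) * c = b.
  rewrite /t; field; rewrite lt0r_neq0 //.
have -> : 1 - t = (b - a) / (c - a) by rewrite /t; field; rewrite lt0r_neq0.
rewrite /t => H.
apply: (le_trans (y := ((c - b) / (c - a) * f a + (b - a) / (c - a) * f c) * (c - a))).
  by rewrite ler_wpM2r // ltW.
rewrite le_eqVlt; apply/orP; left; apply/eqP; field; rewrite lt0r_neq0 //.
Qed.
Arguments three_slope {R f a b c}.

Lemma deriv_le_slope (R : realType) (f : R -> R) x y :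
  convex_on_nonneg f -> derivable f x 1 -> 0 < x -> x < y ->
  derive1 f x <= (f y - f x) / (y - x).
Proof.
move=> cf df x0 xy.
rewrite derive1E; apply: limr_le => //.
have m0 : 0 < Num.min x (y - x) by rewrite lt_min x0 /=; lra.
near=> h.
have hn : h != 0 by near: h; exact: nbhs_dnbhs_neq.
have hm : `|h| < Num.min x (y - x) by near: h; exact: dnbhs0_lt.
move: hm; rewrite lt_min => /andP[hx hy].
rewrite /= /shift scaler1 [_ *: _]/=.
rewrite -[_ *: _]/(h^-1 * (f (h + x) - f x)).
have yx0 : 0 < y - x by lra.
rewrite ler_pdivlMr //.
have [h0|h0] := ltP 0 h.
- have := three_slope cf (ltW x0) (_ : x < h + x) (_ : h + x < y).
  have ha : `|h| = h by rewrite gtr0_norm.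
  rewrite ha in hy.
  move=> /(_ ltac:(lra) ltac:(lra)) H.
  rewrite -(ler_pM2r h0).
  have -> : h^-1 * (f (h + x) - f x) * (y - x) * h = (f (h + x) - f x) * (y - x).
    by field.
  nra.
- have hneg : h < 0 by rewrite lt_neqAle hn h0.
  have ha : `|h| = - h by rewrite ltr0_norm.
  rewrite ha in hx hy.
  have := three_slope cf (_ : 0 <= h + x) (_ : h + x < x) xy.
  move=> /(_ ltac:(lra) ltac:(lra)) H.
  rewrite -(ler_nM2r hneg).
  have -> : h^-1 * (f (h + x) - f x) * (y - x) * h = (f (h + x) - f x) * (y - x).
    by field.
  nra.
Unshelve. all: end_near. Qed.

Lemma slope_le_deriv (R : realType) (f : R -> R) x y :
  convex_on_nonneg f -> derivable f y 1 -> 0 < x -> x < y ->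
  (f y - f x) / (y - x) <= derive1 f y.
Proof.
move=> cf df x0 xy.
rewrite derive1E; apply: limr_ge => //.
have m0 : 0 < Num.min x (y - x) by rewrite lt_min x0 /=; lra.
near=> h.
have hn : h != 0 by near: h; exact: nbhs_dnbhs_neq.
have hm : `|h| < Num.min x (y - x) by near: h; exact: dnbhs0_lt.
move: hm; rewrite lt_min => /andP[hx hy].
rewrite /= /shift scaler1 [_ *: _]/=.
rewrite -[_ *: _]/(h^-1 * (f (h + y) - f y)).
have yx0 : 0 < y - x by lra.
rewrite ler_pdivrMr //.
have [h0|h0] := ltP 0 h.
- have := three_slope cf (ltW x0) xy (_ : y < h + y).
  have ha : `|h| = h by rewrite gtr0_norm.
  rewrite ha in hy.
  move=> /(_ ltac:(lra)) H.
  rewrite -(ler_pM2r h0).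
  have -> : h^-1 * (f (h + y) - f y) * (y - x) * h = (f (h + y) - f y) * (y - x).
    by field.
  nra.
- have hneg : h < 0 by rewrite lt_neqAle hn h0.
  have ha : `|h| = - h by rewrite ltr0_norm.
  rewrite ha in hx hy.
  have := three_slope cf (ltW x0) (_ : x < h + y) (_ : h + y < y).
  move=> /(_ ltac:(lra) ltac:(lra)) H.
  rewrite -(ler_nM2r hneg).
  have -> : h^-1 * (f (h + y) - f y) * (y - x) * h = (f (h + y) - f y) * (y - x).
    by field.
  nra.
Unshelve. all: end_near. Qed.

Lemma deriv_mono (R : realType) (f : R -> R) x y :
  convex_on_nonneg f -> derivable f x 1 -> derivable f y 1 -> 0 < x -> x < y ->
  derive1 f x <= derive1 f y.
Proof.
move=> cf dx dy x0 xy.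
exact: (le_trans (@deriv_le_slope R f x y cf dx x0 xy) (@slope_le_deriv R f x y cf dy x0 xy)).
Qed.

Lemma finv_le (R : realType) (f finv : R -> R) :
  convex_on_nonneg f ->
  (forall x : R, 0 < x -> derivable f x 1) ->
  (forall t : R, derive1 f (finv t) = t) ->
  (forall t : R, 0 < finv t) ->
  forall s t, s <= t -> finv s <= finv t.
Proof.
move=> cf df h2 pos s t st.
rewrite leNgt; apply/negP => lt.
have := @deriv_mono R f (finv t) (finv s) cf (df _ (pos t)) (df _ (pos s)) (pos t) lt.
rewrite !h2 => ts.
have e : s = t by apply/eqP; rewrite eq_le st ts.
by move: lt; rewrite e ltxx.
Qed.

Lemma finv_cont (R : realType) (f finv : R -> R) :
  convex_on_nonneg f ->
  (forall x : R, 0 < x -> derivable f x 1) ->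
  (forall x : R, 0 < x -> finv (derive1 f x) = x) ->
  (forall t : R, derive1 f (finv t) = t) ->
  (forall t : R, 0 < finv t) ->
  continuous finv.
Proof.
move=> cf df h1 h2 pos t.
have mono := @finv_le R f finv cf df h2 pos.
apply/cvgrPdist_lt => eps eps0.
set a := finv t.
have a0 : 0 < a := pos t.
set e := Num.min eps a / 2.
have e0 : 0 < e by rewrite /e divr_gt0 // lt_min eps0 a0.
have ea : e < a by rewrite /e; have := ge_min a eps a; rewrite lexx orbT => ?; 
  rewrite ltr_pdivrMr //; lra.
have ee : e < eps.
  rewrite /e ltr_pdivrMr //; have : Num.min eps a <= eps by rewrite ge_min lexx.
  lra.
have ae0 : 0 < a - e by lra.
have ae1 : 0 < a + e by lra.
set t1 := derive1 f (a - e).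
set t2 := derive1 f (a + e).
have ft1 : finv t1 = a - e by rewrite h1.
have ft2 : finv t2 = a + e by rewrite h1.
have tt1 : t1 < t.
  rewrite ltNge; apply/negP => /mono; rewrite ft1 -/a; lra.
have tt2 : t < t2.
  rewrite ltNge; apply/negP => /mono; rewrite ft2 -/a; lra.
have : t \in `]t1, t2[ by rewrite in_itv /= tt1 tt2.
move=> /near_in_itvoo; apply: filterS => s.
rewrite in_itv /= => /andP[s1 s2].
have := mono _ _ (ltW s1); have := mono _ _ (ltW s2).
rewrite ft1 ft2 => u1 u2.
have hh : `|a - finv s| <= e.
  by rewrite ler_norml; apply/andP; split; lra.
exact: le_lt_trans hh ee.
Qed.

Theorem lemma3 (R : realType) (d : nat) (X Y : Type)
  (M : set 'rV[R]_d) (h : 'rV[R]_d -> X -> Y) (loss : Y -> Y -> R)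
  (n : nat) (z : 'I_n -> X * Y) (Q : probability (borelRd R d) R)
  (f finv : R -> R) :
  (* standing assumptions *)
  (forall y1 y2, 0 <= loss y1 y2) ->
  (forall y, loss y y = 0) ->
  measurable (M : set (borelRd R d)) ->
  Q (~` M : set (borelRd R d)) = 0%E ->
  measurable_fun (M : set (borelRd R d)) (Lz h loss z) ->
  convex_on_nonneg f -> f 1 = 0 ->
  strictly_convex_on_nonneg f ->
  (forall x : R, 0 < x -> derivable f x 1) ->
  (* finv is the inverse of f' : (0,+oo) -> R, defined on all of R *)
  (forall x : R, 0 < x -> finv (derive1 f x) = x) ->
  (forall t : R, derive1 f (finv t) = t) ->
  (* hypothesis of the lemma: finv is strictly positive *)
  (forall t : R, 0 < finv t) ->
  admissible M h loss z Q finv = [set lam : R | 0 < lam].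
Proof.
move=> loss0 lossd mM QMc mL cf f1 scf df h1 h2 pos.
have mono := @finv_le R f finv cf df h2 pos.
have cont := @finv_cont R f finv cf df h1 h2 pos.
rewrite /admissible; apply/seteqP; split => lam /=; first by case.
move=> lam0; split => //.
set L := Lz h loss z.
have L0 th : 0 <= L th.
  rewrite /L /Lz mulr_ge0 // ?invr_ge0 // sumr_ge0 // => i _; exact: loss0.
have QM : Q (M : set (borelRd R d)) = 1%E.
  have := probability_setC Q mM; rewrite QMc.
  have : Q M \is a fin_num by rewrite fin_num_measure.
  case: (Q M) => // r _ /eqP; rewrite eq_sym -EFinB eqe subr_eq0 => /eqP <-.
  by [].
pose F b th := finv (- (b + L th) / lam).
pose G b := (\int[Q]_(th in M) (F b th)%:E)%E.
suff [b Gb] : exists b, G b = 1%E.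
  by exists b; split => // th _ _; exact: pos.
have mF b : measurable_fun (M : set (borelRd R d)) (fun th : borelRd R d => (F b th)%:E).
  apply/measurable_EFinP.
  apply: (measurableT_comp (continuous_measurable_fun cont)).
  apply: measurable_funM => //.
  apply: measurable_funN.
  by apply: measurable_funD.
have Fge0 b th : (0 <= (F b th)%:E)%E by rewrite lee_fin; exact/ltW/pos.
have Fmono b b' th : b <= b' -> F b' th <= F b th.
  move=> bb; apply: mono; rewrite ler_pM2r ?invr_gt0 //; lra.
have Gmono b b' : b <= b' -> (G b' <= G b)%E.
  move=> bb; apply: ge0_le_integral => //.
  by move=> th _; rewrite lee_fin Fmono.
have Gcst c : (\int[Q]_(th in M) (c%:E) = c%:E)%E.
  rewrite integral_cst // -[RHS]mule1; congr (_ * _)%E; exact: QM.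
have Gcvg (u : R^nat) (b c : R) : (forall k, c <= u k) -> u k @[k --> \oo] --> b ->
    G (u k) @[k --> \oo] --> G b.
  move=> uc ub.
  apply: (@dominated_cvg _ _ _ Q M mM (fun k th => (F (u k) th)%:E) _
     (fun _ => (finv (- c / lam))%:E)).
  - by move=> k; exact: mF.
  - move=> th Mth; apply: cvg_EFin; first exact: nearW.
    have : (fun k => - (u k + L th) / lam) @ \oo --> - (b + L th) / lam.
      apply: cvgMr_tmp; apply: cvgN; apply: cvgD => //; exact: cvg_cst.
    exact: (continuous_cvg _ (cont _)).
  - by [].
  - exact: finite_measure_integrable_cst.
  - move=> k th Mth; rewrite gee0_abs // lee_fin; apply: mono.
    rewrite ler_pM2r ?invr_gt0 //; have := uc k; have := L0 th; lra.
pose b0 := - (lam * derive1 f (2^-1)).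
have Gb0 : (G b0 < 1)%E.
  apply: (le_lt_trans (y := (\int[Q]_(th in M) ((2^-1 : R)%:E))%E)).
    apply: ge0_le_integral => //.
    move=> th _; rewrite lee_fin -[X in _ <= X](h1 (2^-1)) //; apply: mono.
    rewrite ler_pdivrMr // /b0; have := L0 th; lra.
  by rewrite Gcst lte_fin; lra.
have [b1 Gb1] : exists b1, (1 <= G b1)%E.
  pose A (k : nat) : set (borelRd R d) :=
    (M : set (borelRd R d)) `&` (L @^-1` [set` `]-oo, (k%:R : R)]]).
  have mA k : measurable (A k).
    by apply: mL => //; exact: measurable_itv.
  have AM k : A k `<=` (M : set (borelRd R d)) by move=> th [].
  have UA : \bigcup_k A k = (M : set (borelRd R d)).
    apply/seteqP; split; first by move=> th [k _ [Mth _]].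
    move=> th Mth; exists (Num.Def.archi_bound (L th)) => //; split => //=.
    by rewrite in_itv /= ltW // archi_boundP.
  have ndA : {homo A : k m / (k <= m)%N >-> (k <= m)%O}.
    move=> k m km; rewrite subsetEset => th [Mth]; rewrite /= !in_itv /= => H.
    by split => //=; rewrite in_itv /= (le_trans H) // ler_nat.
  have mU : measurable (\bigcup_k A k) by rewrite UA.
  have cA := @nondecreasing_cvg_mu _ _ R Q A mA mU ndA.
  have hA : {homo (Q \o A) : k m / (k <= m)%N >-> (k <= m)%E}.
    move=> k m km; apply: le_measure; rewrite ?inE //.
    by move: (ndA k m km); rewrite subsetEset.
  have limA : limn (Q \o A) = 1%E.
    rewrite (cvg_lim _ cA) // UA; exact: QM.
  have hlt : ((3 / 4 : R)%:E < limn (Q \o A))%E by rewrite limA lte_fin; lra.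
  have [N _ /(_ N (leqnn N)) /= HN] := @lte_lim R (Q \o A) (3 / 4) hA (cvgP _ cA) hlt.
  exists (- (N%:R) - lam * derive1 f 2).
  apply: (le_trans (y := (\int[Q]_(th in A N) (F (- (N%:R) - lam * derive1 f 2) th)%:E)%E)); last first.
    by apply: ge0_subset_integral => //.
  apply: (le_trans (y := (\int[Q]_(th in A N) (2 : R)%:E)%E)); last first.
    apply: ge0_le_integral => //.
    - exact: measurable_funS (mF _).
    move=> th [Mth]; rewrite /= in_itv /= => HL.
    rewrite lee_fin -[X in X <= _](h1 2) //; apply: mono.
    rewrite ler_pdivlMr //; lra.
  rewrite integral_cst //.
  apply: (le_trans (y := ((2 : R)%:E * (3 / 4 : R)%:E)%E)).
    by rewrite -EFinM lee_fin; lra.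
  by rewrite lee_pmul2l // lte_fin.
pose S := [set b | (1 <= G b)%E].
have ubS : ubound S b0.
  move=> b Sb; rewrite leNgt; apply/negP => b0b.
  have := le_lt_trans (Gmono _ _ (ltW b0b)) Gb0.
  by rewrite ltNge Sb.
have hS : has_sup S by split; [exists b1 | exists b0].
pose bs := sup S.
have hle1 : forall k : nat, harmonic k <= 1 :> R.
  by move=> k; rewrite /= invf_le1 // ler1n.
exists bs; apply/eqP; rewrite eq_le; apply/andP; split.
- have cv : (fun k => bs + harmonic k) @ \oo --> bs.
    rewrite -[X in _ --> X]addr0; apply: cvgD; [exact: cvg_cst | exact: cvg_harmonic].
  apply: (cvge_to_le (Gcvg _ _ bs _ cv)).
    by move=> k; rewrite lerDl harmonic_ge0.
  apply: nearW => k; apply: ltW; rewrite ltNge; apply/negP => Sk.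
  have := sup_upper_bound hS Sk; rewrite -/bs => H.
  have := harmonic_gt0 (R := R) k; lra.
- have cv : (fun k => bs - harmonic k) @ \oo --> bs.
    rewrite -[X in _ --> X]subr0; apply: cvgB; [exact: cvg_cst | exact: cvg_harmonic].
  apply: (cvge_to_ge (Gcvg _ _ (bs - 1) _ cv)).
    by move=> k; rewrite lerB // hle1.
  apply: nearW => k.
  have [e Se He] := sup_adherent (harmonic_gt0 k) hS.
  apply: le_trans Se _; apply: Gmono; rewrite -/bs in He; exact: ltW.
Qed.
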